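(* Let $K$ be a field of characteristic zero, $x=(x_1,\dots,x_n)$, and let $G\in K[x]^n$ be a Keller map such that $\mathcal{J}G$ is symmetric. Let $i$ be an index and $d$ a positive integer such that $\frac{\partial}{\partial x_i}G_i^{(1)}\neq 0$ and $G_i^{(1)}\mid G_i^{(k)}$ for all $k\in\{1,2,\dots,d-1\}$, where $G_i^{(k)}$ denotes the homogeneous part of degree $k$ of $G_i$. If for some $c\in K$ the polynomial $G_i-c$ has a divisor $g$ with $\deg g<d$ and $g(0)=0$, then $\deg G_i=1$.
   Context: A Keller map is a polynomial map $G\in K[x]^n$ with $\det\mathcal{J}G\in K^{*}$, $\mathcal{J}$ the Jacobian matrix. *)

(* Defs.v *)
From HB Require Import structures.
From mathcomp Require Import all_boot all_order all_algebra.
From mathcomp Require Import mpoly.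
Set Implicit Arguments. Unset Strict Implicit. Unset Printing Implicit Defensive.
Import Order.TTheory GRing.Theory Num.Theory.
Local Open Scope ring_scope.

Definition hpart (n : nat) (R : ringType) (k : nat) (p : {mpoly R[n]}) : {mpoly R[n]} :=
  \sum_(m <- msupp p | mdeg m == k) p@_m *: 'X_[m].

(* Total degree (with deg 0 = 0; only used on nonzero / via "<" below). *)
Definition mtdeg (n : nat) (R : ringType) (p : {mpoly R[n]}) : nat := (msize p).-1.

Definition mdvd (n : nat) (R : ringType) (g p : {mpoly R[n]}) : Prop :=
  exists q : {mpoly R[n]}, p = q * g.

Definition jacobian (n : nat) (R : ringType) (G : 'I_n -> {mpoly R[n]}) : 'M[{mpoly R[n]}]_n :=
  \matrix_(i < n, j < n) (G i)^`M(j).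

Definition keller (n : nat) (R : comRingType) (G : 'I_n -> {mpoly R[n]}) : Prop :=
  exists2 c : R, c != 0 & \det (jacobian G) = c%:MP.

(* Main.v *)
Require Import Defs.
From HB Require Import structures.
From mathcomp Require Import all_boot all_order all_algebra.
From mathcomp Require Import mpoly.
From mathcomp Require Import ring zify.
Set Implicit Arguments. Unset Strict Implicit. Unset Printing Implicit Defensive.
Import Order.TTheory GRing.Theory Num.Theory.
Local Open Scope ring_scope.

Section Jac.
Variable (K : fieldType) (n : nat).
Local Notation P := {mpoly K[n]}.

Lemma mderiv_prod (j : 'I_n) (m : nat) (f : 'I_m -> P) :
  (\prod_(k < m) f k)^`M(j) =
  \sum_(l < m) \prod_(k < m) (if k == l then (f k)^`M(j) else f k).
Proof.
elim: m f => [|m IH] f.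
  by rewrite !big_ord0 -mpolyC1 mderivC.
rewrite [in LHS]big_ord_recl mderivM IH [in RHS]big_ord_recl.
congr (_ + _).
  rewrite big_ord_recl eqxx; congr (_ * _); apply: eq_bigr => k _.
rewrite mulr_sumr; apply: eq_bigr => l _.
rewrite big_ord_recl /=; congr (_ * _).

Qed.

Lemma mderiv_sign (j : 'I_n) (b : nat) : ((-1) ^+ b : P)^`M(j) = 0.
Proof.
case: (odd b) (@signr_odd P b) => <-.
  by rewrite expr1 mderivN -mpolyC1 mderivC oppr0.
by rewrite expr0 -mpolyC1 mderivC.
Qed.

Lemma mderiv_det (j : 'I_n) (A : 'M[P]_n) :
  (\det A)^`M(j) = \sum_k \sum_l (A k l)^`M(j) * cofactor A k l.
Proof.
pose M k := \matrix_(r, c) (if r == k then (A r c)^`M(j) else A r c).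
have HM k : \det (M k) = \sum_l (A k l)^`M(j) * cofactor A k l.
  rewrite (expand_det_row _ k); apply: eq_bigr => l _.
  rewrite mxE eqxx; congr (_ * _).
  rewrite /cofactor; congr (_ * _); congr (\det _).
  apply/matrixP => r c; rewrite !mxE eq_sym (negbTE (neq_lift _ _)) //.
rewrite (eq_bigr _ (fun k _ => esym (HM k))).
rewrite /determinant raddf_sum /= exchange_big /=.
apply: eq_bigr => s _.
rewrite mderivM mderiv_sign mul0r add0r mderiv_prod mulr_sumr.
apply: eq_bigr => k _; congr (_ * _); apply: eq_bigr => r _.
by rewrite mxE; case: (r == k).
Qed.

End Jac.
Section Ord.
Variable (K : fieldType) (n : nat).
Local Notation P := {mpoly K[n]}.

Definition Ord (e : nat) (p : P) := forall m, (mdeg m < e)%N -> p@_m = 0.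
Definition Deg (e : nat) (p : P) := forall m, (e < mdeg m)%N -> p@_m = 0.

Lemma Ord0 e : Ord e 0. Proof. by move=> m _; rewrite mcoeff0. Qed.
Lemma Deg0 e : Deg e 0. Proof. by move=> m _; rewrite mcoeff0. Qed.
Lemma OrdD e p q : Ord e p -> Ord e q -> Ord e (p + q).
Proof. by move=> hp hq m hm; rewrite mcoeffD hp ?hq ?addr0. Qed.
Lemma DegD e p q : Deg e p -> Deg e q -> Deg e (p + q).
Proof. by move=> hp hq m hm; rewrite mcoeffD hp ?hq ?addr0. Qed.
Lemma OrdN e p : Ord e p -> Ord e (- p).
Proof. by move=> hp m hm; rewrite mcoeffN hp ?oppr0. Qed.
Lemma DegN e p : Deg e p -> Deg e (- p).
Proof. by move=> hp m hm; rewrite mcoeffN hp ?oppr0. Qed.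
Lemma OrdB e p q : Ord e p -> Ord e q -> Ord e (p - q).
Proof. by move=> hp hq; apply: OrdD => //; apply: OrdN. Qed.
Lemma OrdZ e c p : Ord e p -> Ord e (c *: p).
Proof. by move=> hp m hm; rewrite mcoeffZ hp ?mulr0. Qed.
Lemma DegZ e c p : Deg e p -> Deg e (c *: p).
Proof. by move=> hp m hm; rewrite mcoeffZ hp ?mulr0. Qed.
Lemma Ord_le a b p : (b <= a)%N -> Ord a p -> Ord b p.
Proof. by move=> hab hp m hm; apply: hp; apply: leq_trans hm hab. Qed.
Lemma Deg_le a b p : (a <= b)%N -> Deg a p -> Deg b p.
Proof. by move=> hab hp m hm; apply: hp; apply: leq_ltn_trans hab hm. Qed.

Lemma OrdM a b p q : Ord a p -> Ord b q -> Ord (a + b) (p * q).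
Proof.
move=> hp hq m hm; rewrite mcoeffM big1 // => k /eqP hk.
have e : mdeg m = (mdeg k.1 + mdeg k.2)%N by rewrite {1}hk mdegD.
rewrite e in hm.
case: (ltnP (mdeg k.1) a) => h1; first by rewrite hp ?mul0r.
rewrite hq ?mulr0 //; move: hm h1; move: (mdeg k.1) (mdeg k.2) => x y; lia.
Qed.

Lemma DegM a b p q : Deg a p -> Deg b q -> Deg (a + b) (p * q).
Proof.
move=> hp hq m hm; rewrite mcoeffM big1 // => k /eqP hk.
have e : mdeg m = (mdeg k.1 + mdeg k.2)%N by rewrite {1}hk mdegD.
rewrite e in hm.
case: (ltnP a (mdeg k.1)) => h1; first by rewrite hp ?mul0r.
rewrite hq ?mulr0 //; move: hm h1; move: (mdeg k.1) (mdeg k.2) => x y; lia.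
Qed.

Lemma Ord1 : Ord 0 1. Proof. by []. Qed.
Lemma Deg1 : Deg 0 1.
Proof. by move=> m; rewrite mcoeff1; case: eqP => [->|]; rewrite ?mdeg0. Qed.
Lemma DegC c : Deg 0 c%:MP.
Proof. by move=> m; rewrite mcoeffC; case: eqP => [->|]; rewrite ?mdeg0 ?mulr0. Qed.

Lemma OrdX a k p : Ord a p -> Ord (a * k) (p ^+ k).
Proof.
move=> hp; elim: k => [|k IH]; first by rewrite muln0 expr0.
by rewrite exprS mulnS; apply: OrdM.
Qed.
Lemma DegX a k p : Deg a p -> Deg (a * k) (p ^+ k).
Proof.
move=> hp; elim: k => [|k IH]; first by rewrite muln0 expr0; apply: Deg1.
by rewrite exprS mulnS; apply: DegM.
Qed.

Lemma Ord_prod (t : 'I_n -> P) (m : 'X_{1..n}) :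
  (forall j, Ord 1 (t j)) -> Ord (mdeg m) (\prod_(j < n) t j ^+ m j).
Proof.
move=> ht; rewrite mdegE.
apply: (big_rec2 (fun a b => Ord a b)) => // j a b _ hb.
by apply: OrdM => //; have := @OrdX _ (m j) _ (ht j); rewrite mul1n.
Qed.
Lemma Deg_prod (t : 'I_n -> P) (m : 'X_{1..n}) :
  (forall j, Deg 1 (t j)) -> Deg (mdeg m) (\prod_(j < n) t j ^+ m j).
Proof.
move=> ht; rewrite mdegE.
apply: (big_rec2 (fun a b => Deg a b)); first exact: Deg1.
by move=> j a b _ hb; apply: DegM => //; have := @DegX _ (m j) _ (ht j); rewrite mul1n.
Qed.

Lemma Ord_comp (t : n.-tuple P) e p :
  (forall j, Ord 1 (tnth t j)) -> Ord e p -> Ord e (p \mPo t).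
Proof.
move=> ht hp; rewrite comp_mpolyE.
elim/big_rec: _ => [|m q _ hq]; first exact: Ord0.
apply: OrdD => //; case: (ltnP (mdeg m) e) => hm.
  by rewrite hp // scale0r; apply: Ord0.
by apply: OrdZ; apply: Ord_le hm _; apply: Ord_prod.
Qed.
Lemma Deg_comp (t : n.-tuple P) e p :
  (forall j, Deg 1 (tnth t j)) -> Deg e p -> Deg e (p \mPo t).
Proof.
move=> ht hp; rewrite comp_mpolyE.
elim/big_rec: _ => [|m q _ hq]; first exact: Deg0.
apply: DegD => //; case: (ltnP e (mdeg m)) => hm.
  by rewrite hp // scale0r; apply: Deg0.
by apply: DegZ; apply: Deg_le hm _; apply: Deg_prod.
Qed.

Lemma Ord_Deg_eq0 e p : Ord e p -> Deg e.-1 p -> (0 < e)%N -> p = 0.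
Proof.
move=> ho hd he; apply/mpolyP => m; rewrite mcoeff0.
case: (ltnP (mdeg m) e) => h; first exact: ho.
by apply: hd; rewrite prednK.
Qed.

Lemma Ord1P p : Ord 1 p <-> p@_0 = 0.
Proof.
split=> [h|h m]; first by apply: h; rewrite mdeg0.
by rewrite ltnS leqn0 mdeg_eq0 => /eqP ->.
Qed.

Lemma Ord1_sub p : Ord 1 (p - (p@_0)%:MP).
Proof. by apply/Ord1P; rewrite mcoeffB mcoeffC eqxx mulr1 subrr. Qed.

Lemma mcoeff_hpart k (p : P) m :
  (hpart k p)@_m = if mdeg m == k then p@_m else 0.
Proof.
rewrite /hpart raddf_sum /= big_mkcond /=.
under eq_bigr do rewrite mcoeffZ mcoeffX.
case: (boolP (m \in msupp p)) => hm.
  rewrite (bigD1_seq m) ?msupp_uniq //= eqxx mulr1.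
  rewrite big1 ?addr0 // => mm hmm; rewrite eq_sym (negbTE hmm) mulr0.
  by rewrite if_same.
move: (hm); rewrite -mcoeff_eq0 => /eqP ->.
rewrite big1_seq ?if_same // => m' /andP[_ hm'].
have ne : m' != m by apply: contraNneq hm => <-.
by rewrite (negbTE ne) mulr0 if_same.
Qed.
End Ord.

Section StepA.
Variable (K : fieldType) (n : nat).
Local Notation P := {mpoly K[n]}.

Lemma meval_zero (p : P) : p.@[fun _ => 0] = p@_0.
Proof.
rewrite mevalE.
have -> : p@_0 = (\sum_(m <- msupp p) p@_m *: 'X_[m])@_0 by rewrite -mpolyE.
rewrite raddf_sum /=; apply: eq_bigr => m _.
rewrite mcoeffZ mcoeffX; congr (_ * _).
case: (eqVneq m 0%MM) => [->|nz].
  by rewrite big1 // => j _; rewrite mnm0E expr0.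
apply/eqP/prodf_eq0.
have [j hj] : exists j, m j != 0%N.
  apply/existsP; apply: contraNT nz; rewrite negb_exists => /forallP h.
  by apply/eqP/mnmP => j; rewrite mnm0E; have := h j; rewrite negbK => /eqP.
by exists j => //; rewrite expf_eq0 eqxx andbT lt0n.
Qed.


End StepA.

Section Sigma.
Variable (K : fieldType) (n : nat).
Local Notation P := {mpoly K[n]}.
Variables (i : 'I_n) (L : P).
Hypothesis hL : forall m, mdeg m != 1%N -> L@_m = 0.
Let a (j : 'I_n) := L@_U_(j).
Hypothesis ai : a i != 0.

Lemma L_deriv j : L^`M(j) = (a j)%:MP.
Proof.
apply/mpolyP => m; rewrite mcoeff_deriv mcoeffC.
case: (eqVneq m 0%MM) => [->|nz].
  by rewrite add0m mnm0E mulr1.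
rewrite mulr0 hL ?mul0rn // mdegD mdeg1 addn1 eqSS mdeg_eq0 //.
Qed.

Lemma L_Ord : Ord 1 L.
Proof. by apply/Ord1P; apply: hL; rewrite mdeg0. Qed.
Lemma L_Deg : Deg 1 L.
Proof. by move=> m hm; apply: hL; rewrite neq_ltn hm orbT. Qed.

Lemma X_Ord j : Ord 1 ('X_j : P).
Proof. by apply/Ord1P; rewrite mcoeffX mnm1_eq0. Qed.
Lemma X_Deg j : Deg 1 ('X_j : P).
Proof. by move=> m hm; rewrite mcoeffX; case: eqP hm => [<-|//]; rewrite mdeg1. Qed.

Definition sig_t : n.-tuple P :=
  [tuple ('X_j - ((j == i)%:R * (a i)^-1) *: L) | j < n].
Definition sig (p : P) : P := p \mPo sig_t.

Lemma sig_t_Ord j : Ord 1 (tnth sig_t j).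
Proof. by rewrite tnth_mktuple; apply: OrdB; [apply: X_Ord| apply: OrdZ; apply: L_Ord]. Qed.
Lemma sig_t_Deg j : Deg 1 (tnth sig_t j).
Proof.
rewrite tnth_mktuple; apply: DegD; first exact: X_Deg.
by apply: DegN; apply: DegZ; apply: L_Deg.
Qed.

Lemma sig_Ord e p : Ord e p -> Ord e (sig p).
Proof. by apply: Ord_comp; apply: sig_t_Ord. Qed.
Lemma sig_Deg e p : Deg e p -> Deg e (sig p).
Proof. by apply: Deg_comp; apply: sig_t_Deg. Qed.

Lemma sigC c : sig c%:MP = c%:MP.
Proof. exact: comp_mpolyC. Qed.

Lemma L_expand : L = \sum_j a j *: 'X_j.
Proof.
apply/mpolyP => m; rewrite raddf_sum /=.
under eq_bigr do rewrite mcoeffZ mcoeffX.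
case: (eqVneq (mdeg m) 1%N) => hm; last first.
  rewrite hL // big1 // => j _; case: eqP => [e|]; last by rewrite mulr0.
  by rewrite -e mdeg1 eqxx in hm.
case/eqP/mdeg1P: hm => j0 /eqP ->.
rewrite (bigD1 j0) //= eqxx mulr1 big1 ?addr0 // => j hj.
case: eqP => [e|]; last by rewrite mulr0.
have : (U_(j) j0 = U_(j0) j0)%MM by rewrite e.
by rewrite !mnm1E eqxx (negbTE hj).
Qed.

Lemma sigL : sig L = 0.
Proof.
rewrite {1}L_expand /sig raddf_sum /=.
under eq_bigr do rewrite comp_mpolyZ comp_mpolyXU nth_mktuple scalerBr scalerA.
rewrite sumrB -L_expand (bigD1 i) //= big1 ?addr0; last first.
  by move=> j hj; rewrite (negbTE hj) mul0r mulr0 scale0r.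
by rewrite eqxx mul1r mulfV // scale1r subrr.
Qed.

Definition cong (x y : P) := exists w, x - y = w * L.

Lemma cong_refl x : cong x x.
Proof. by exists 0; rewrite subrr mul0r. Qed.
Lemma congD x y x' y' : cong x y -> cong x' y' -> cong (x + x') (y + y').
Proof. by move=> [w e] [w' e']; exists (w + w'); rewrite mulrDl -e -e'; ring. Qed.
Lemma congM x y x' y' : cong x y -> cong x' y' -> cong (x * x') (y * y').
Proof.
move=> [w e] [w' e']; exists (x * w' + w * y').
have -> : x * x' - y * y' = x * (x' - y') + (x - y) * y' by ring.
by rewrite e e'; ring.
Qed.
Lemma congZ c x y : cong x y -> cong (c *: x) (c *: y).
Proof. by move=> [w e]; exists (c *: w); rewrite -scalerBr e scalerAl. Qed.
Lemma congX k x y : cong x y -> cong (x ^+ k) (y ^+ k).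
Proof.
move=> h; elim: k => [|k IH]; first by rewrite !expr0; apply: cong_refl.
by rewrite !exprS; apply: congM.
Qed.

Lemma cong_sig p : cong p (sig p).
Proof.
rewrite {1}[p]mpolyE /sig comp_mpolyEX.
elim/big_rec2: _ => [|m x y _ hxy]; first by apply: cong_refl.
apply: congD => //; apply: congZ; rewrite comp_mpolyX mpolyXE_id.
apply: (big_rec2 (fun x y => cong x y)); first exact: cong_refl.
move=> j x' y' _ h; apply: congM => //; apply: congX.
rewrite tnth_mktuple; exists ((j == i)%:R * (a i)^-1)%:MP.
by rewrite opprB addrC subrK mul_mpolyC.
Qed.

Lemma sig_coef0 p : (sig p)@_0 = p@_0.
Proof.
rewrite /sig.
have e : p = (p@_0)%:MP + (p - (p@_0)%:MP) by rewrite addrC subrK.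
rewrite [in LHS]e raddfD /= comp_mpolyC mcoeffD.
have := sig_Ord (Ord1_sub p); move/Ord1P; rewrite /sig => ->.
by rewrite addr0 mcoeffC eqxx mulr1.
Qed.


Lemma nz_coef (p : P) : p != 0 -> exists m, p@_m != 0.
Proof.
move=> nz; case e: (msupp p) => [|m s].
  by move/msuppnil0: e => /eqP; rewrite (negbTE nz).
by exists m; rewrite mcoeff_eq0 negbK e in_cons eqxx.
Qed.

Lemma mdvd_sum (I : Type) (r : seq I) (Q : pred I) (f : I -> P) :
  (forall k, Q k -> mdvd L (f k)) -> mdvd L (\sum_(k <- r | Q k) f k).
Proof.
move=> h; elim/big_rec: _ => [|k x hk [w ->]]; first by exists 0; rewrite mul0r.
by case: (h k hk) => w' ->; exists (w' + w); rewrite mulrDl.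
Qed.

Lemma stepA (Gi : P) (c : K) (q g : P) (d : nat) :
  L = hpart 1 Gi -> L != 0 -> (0 < d)%N ->
  (forall k : nat, (1 <= k < d)%N -> mdvd L (hpart k Gi)) ->
  Gi - c%:MP = q * g -> g.@[fun _ => 0] = 0 -> (mtdeg g < d)%N ->
  mdvd L (Gi - c%:MP).
Proof.
set F := Gi - c%:MP => eL nzL d0 hk eF g0 gd.
have g00 : g@_0 = 0 by rewrite -meval_zero.
have F0 : F@_0 = 0 by rewrite -meval_zero eF mevalM g0 mulr0.
have hF k : (1 <= k)%N -> hpart k F = hpart k Gi.
  move=> k1; apply/mpolyP => m; rewrite !mcoeff_hpart.
  case: eqP => // ek; rewrite mcoeffB mcoeffC.
  case: eqP => [em|]; last by rewrite mulr0 subr0.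
  by move: k1; rewrite -ek em mdeg0.
have hF0 : hpart 0 F = 0.
  apply/mpolyP => m; rewrite mcoeff_hpart mcoeff0; case: eqP => // /eqP.
  by rewrite mdeg_eq0 => /eqP ->.
have q0 : q@_0 != 0.
  apply/eqP => q00; have [m hm] := nz_coef nzL.
  have m1 : mdeg m = 1%N by apply/eqP; apply: contraNT hm => /hL ->.
  move: hm; rewrite eL -hF // mcoeff_hpart m1 eqxx eF.
  have : Ord 2 (q * g) by apply: (OrdM (a:=1) (b:=1)); apply/Ord1P.
  by move=> h; rewrite h ?m1 ?eqxx.
pose T := \sum_(k < d) hpart k F.
have dT : mdvd L T.
  rewrite /T; apply: mdvd_sum => k _.
  case: (posnP k) => [->|kp]; first by rewrite hF0; exists 0; rewrite mul0r.
  by rewrite hF //; apply: hk; rewrite kp ltn_ord.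
have oFT : Ord d (F - T).
  move=> m hm; rewrite mcoeffB /T raddf_sum /=.
  rewrite (bigD1 (Ordinal hm)) //= mcoeff_hpart eqxx big1 ?addr0 ?subrr //.
  move=> k hk'; rewrite mcoeff_hpart; case: eqP => // e.
  by move: hk'; rewrite -val_eqE /= e eqxx.
have sF : Ord d (sig F).
  have -> : F = T + (F - T) by rewrite addrC subrK.
  rewrite /sig raddfD /=; apply: OrdD; last exact: sig_Ord.
  case: dT => w ->; rewrite rmorphM /=.
  by have := sigL; rewrite /sig => ->; rewrite mulr0; apply: Ord0.
have sFe : sig F = q@_0 *: sig g + sig (q - (q@_0)%:MP) * sig g.
  rewrite eF /sig rmorphM /=.
  have eq : q = (q@_0)%:MP + (q - (q@_0)%:MP) by rewrite addrC subrK.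
  by rewrite {1}eq rmorphD /= comp_mpolyC mulrDl mul_mpolyC.
have sg : forall e, (1 <= e <= d)%N -> Ord e (sig g).
  elim=> // e IH /andP[e1 ed].
  case: (posnP e) => [e0|ep].
    by subst e; apply: sig_Ord; apply/Ord1P.
  have IH' : Ord e (sig g) by apply: IH; rewrite ep ltnW.
  move=> m hm; case: (ltnP (mdeg m) e) => hme; first exact: IH'.
  have eme : mdeg m = e by apply/eqP; rewrite eqn_leq hme -ltnS hm.
  have : (sig F)@_m = 0 by apply: sF; rewrite eme.
  rewrite sFe mcoeffD mcoeffZ.
  have -> : (sig (q - (q@_0)%:MP) * sig g)@_m = 0.
    apply: (OrdM (a := 1) (b := e)); [exact: sig_Ord (Ord1_sub q) | exact: IH' | by rewrite eme add1n].
  by rewrite addr0 => /eqP; rewrite mulf_eq0 (negbTE q0) /= => /eqP.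
have sgd : Ord d (sig g) by apply: sg; rewrite d0 leqnn.
have gD : Deg d.-1 g.
  move=> m hm; apply/eqP; rewrite mcoeff_eq0; apply: msize_mdeg_ge.
  move: gd hm; rewrite /mtdeg; move: (msize g) (mdeg m) => x y; lia.
have sg0 : sig g = 0 by apply: (Ord_Deg_eq0 sgd) => //; apply: sig_Deg.
have [w ew] := cong_sig g; rewrite sg0 subr0 in ew.
by exists (q * w); rewrite eF ew mulrA.
Qed.

Lemma mderivXn (j : 'I_n) (p : P) k :
  (p ^+ k.+1)^`M(j) = k.+1%:R * p ^+ k * p^`M(j).
Proof.
elim: k => [|k IH]; first by rewrite expr1 expr0 mulr1 mul1r.
rewrite exprS mderivM IH -[k.+2%:R]natr1 exprS; ring.
Qed.

Lemma Deg_msize e (p : P) : Deg e p -> (msize p <= e.+1)%N.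
Proof.
move=> hp; rewrite msizeE; apply/bigmax_leqP_seq => m hm _.
rewrite ltnS leqNgt; apply/negP => h; move: hm.
by rewrite -[_ \in _]negbK -mcoeff_eq0 hp ?eqxx.
Qed.

Lemma msizeL : L != 0 -> msize L = 2%N.
Proof.
move=> nz; apply/eqP; rewrite eqn_leq (Deg_msize L_Deg) /=.
have [m hm] := nz_coef nz.
have m1 : mdeg m = 1%N by apply/eqP; apply: contraNT hm => /hL ->.
rewrite -m1; apply: msize_mdeg_lt; rewrite -[_ \in _]negbK -mcoeff_eq0; exact: hm.
Qed.

Lemma msizeLX k : L != 0 -> msize (L ^+ k) = k.+1.
Proof.
move=> nz; elim: k => [|k IH]; first by rewrite expr0 msize1.
rewrite exprS msizeM ?msizeL ?IH //; last by rewrite expf_neq0.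
Qed.

Lemma h0_one (F h : P) : F = h * L -> hpart 1 F = L -> L != 0 -> h@_0 = 1.
Proof.
move=> eF e1 nz; have [m hm] := nz_coef nz.
have m1 : mdeg m = 1%N by apply/eqP; apply: contraNT hm => /hL ->.
have eh : h * L = (h@_0) *: L + (h - (h@_0)%:MP) * L.
  by rewrite -mul_mpolyC; ring.
have o2 : Ord 2 ((h - (h@_0)%:MP) * L).
  by apply: (OrdM (a:=1)(b:=1)); [apply: Ord1_sub | apply: L_Ord].
have : L@_m = h@_0 * L@_m.
  by rewrite -{1}e1 mcoeff_hpart m1 eqxx eF eh mcoeffD mcoeffZ o2 ?m1 // addr0.
move/eqP; rewrite -subr_eq0 -{1}[L@_m]mul1r -mulrBl mulf_eq0 (negbTE hm) orbF.
by rewrite subr_eq0 => /eqP <-.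
Qed.

Lemma base_step (F h : P) (C : 'I_n -> 'I_n -> P) (dl : K) :
  dl != 0 -> F = h * L -> h@_0 = 1 ->
  \sum_k \sum_l (a k)%:MP * F^`M(l) * C k l = (dl * a i)%:MP ->
  exists u, h - 1 = L ^+ 1 * u.
Proof.
move=> dl0 eF h01 E1.
pose X := \sum_k \sum_l (a k * a l)%:MP * C k l.
pose Y := \sum_k \sum_l (a k)%:MP * h^`M(l) * C k l.
have eE : \sum_k \sum_l (a k)%:MP * F^`M(l) * C k l = h * X + L * Y.
  rewrite /X /Y !mulr_sumr -big_split; apply: eq_bigr => k _.
  rewrite !mulr_sumr -big_split; apply: eq_bigr => l _.
  by rewrite eF mderivM L_deriv rmorphM /=; ring.
rewrite eE in E1.
have es : sig h * sig X = (dl * a i)%:MP.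
  have := congr1 sig E1; have sL := sigL; rewrite /sig in sL *.
  by rewrite rmorphD !rmorphM /= !comp_mpolyC sL mul0r addr0 => ->.
have nzc : (dl * a i) != 0 by rewrite mulf_neq0.
have nzh : sig h != 0 by apply: contra_eq_neq es => ->; rewrite mul0r eq_sym mpolyC_eq0.
have nzX : sig X != 0 by apply: contra_eq_neq es => ->; rewrite mulr0 eq_sym mpolyC_eq0.
have : msize (sig h * sig X) = 1%N by rewrite es msizeC nzc.
rewrite msizeM // => hs.
have h1 : (0 < msize (sig h))%N by rewrite lt0n msize_poly_eq0.
have h2 : (0 < msize (sig X))%N by rewrite lt0n msize_poly_eq0.
have : (msize (sig h) <= 1)%N by move: hs h1 h2; move: (msize (sig h)) (msize (sig X)) => x y; lia.
move/msize1_polyC; rewrite sig_coef0 h01 => sh1.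
have [w ew] := cong_sig h; exists w; by rewrite expr1 mulrC -ew sh1.
Qed.

Lemma mderiv_nat k j : (k%:R : P)^`M(j) = 0.
Proof. by rewrite mderivMn -mpolyC1 mderivC mul0rn. Qed.

Lemma ind_step (F h : P) (C : 'I_n -> 'I_n -> P) (dl : K) (s : nat) (u : P) :
  [pchar K] =i pred0 -> dl != 0 -> L != 0 -> F = h * L ->
  \sum_k \sum_l (a k)%:MP * F^`M(l) * C k l = (dl * a i)%:MP ->
  \sum_k \sum_l F^`M(k)^`M(l) * C k l = 0 ->
  h - 1 = L ^+ s.+1 * u -> exists u', h - 1 = L ^+ s.+2 * u'.
Proof.
move=> ch dl0 nzL eF E1 E2 eu.
have eF' : F = L + L ^+ s.+2 * u.
  rewrite eF; have -> : h = L ^+ s.+1 * u + 1 by rewrite -eu subrK.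
  by rewrite !exprS; ring.
pose N := ((s.+2)%:R * (s.+1)%:R : P).
have dF l : F^`M(l) = (a l)%:MP + L ^+ s.+1 * ((s.+2)%:R * (a l)%:MP * u + L * u^`M(l)).
  by rewrite eF' mderivD mderivM mderivXn L_deriv !exprS; ring.
pose W k l := (s.+2)%:R * (a k)%:MP * u^`M(l) + (s.+2)%:R * (a l)%:MP * u^`M(k)
   + L * u^`M(k)^`M(l).
have ddF k l : F^`M(k)^`M(l) =
    L ^+ s * (N * (a k)%:MP * (a l)%:MP * u) + L ^+ s.+1 * W k l.
  rewrite dF mderivD mderivC add0r mderivM mderivXn L_deriv.
  rewrite mderivD mderivM mderivM mderivM L_deriv !mderivC.
  rewrite /W /N mderiv_nat; rewrite !exprS; ring.
pose X := \sum_k \sum_l ((a k)%:MP * (a l)%:MP) * C k l.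
pose Q := \sum_k \sum_l (a k)%:MP * ((s.+2)%:R * (a l)%:MP * u + L * u^`M(l)) * C k l.
pose Z := \sum_k \sum_l W k l * C k l.
have eE1 : X + L ^+ s.+1 * Q = (dl * a i)%:MP.
  rewrite -E1 /X /Q !mulr_sumr -big_split; apply: eq_bigr => k _.
  rewrite !mulr_sumr -big_split; apply: eq_bigr => l _.
  by rewrite dF !exprS /=; ring.
have eE2 : L ^+ s * (N * u * X) + L ^+ s.+1 * Z = 0.
  rewrite -E2 /X /Z !mulr_sumr -big_split; apply: eq_bigr => k0 _.
  rewrite !mulr_sumr -big_split; apply: eq_bigr => l0 _.
  by rewrite ddF !exprS /=; ring.
have eX : X = (dl * a i)%:MP - L ^+ s.+1 * Q by rewrite -eE1 addrK.
rewrite eX in eE2.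
have key : L ^+ s * (N * (dl * a i)%:MP * u) = L ^+ s * (L * (N * u * L ^+ s * Q - Z)).
  apply/eqP; rewrite -subr_eq0; apply/eqP; rewrite -eE2 !exprS; ring.
have nzLs : L ^+ s != 0 by rewrite expf_neq0.
move/(mulfI nzLs): key => key.
pose kap := ((s.+2)%:R * (s.+1)%:R * (dl * a i) : K).
have nzk : kap != 0.
  rewrite /kap !mulf_neq0 //; by move/pcharf0P: ch => ->.
have eN : N * (dl * a i)%:MP = kap%:MP by rewrite /N /kap !rmorphM /= !rmorph_nat.
rewrite eN in key.
exists ((kap^-1)%:MP * (N * u * L ^+ s * Q - Z)).
rewrite eu; have eu2 : u = (kap^-1)%:MP * (L * (N * u * L ^+ s * Q - Z)).
  by rewrite -key mulrA -rmorphM /= mulVf // mul1r.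
by rewrite {1}eu2 !exprS; ring.
Qed.

End Sigma.

Theorem theorem7p3 (K : fieldType) (n : nat) (G : 'I_n -> {mpoly K[n]})
  (i : 'I_n) (d : nat) :
  [pchar K] =i pred0 ->
  keller G ->
  (jacobian G)^T = jacobian G ->
  (0 < d)%N ->
  (hpart 1 (G i))^`M(i) != 0 ->
  (forall k : nat, (1 <= k < d)%N -> mdvd (hpart 1 (G i)) (hpart k (G i))) ->
  (exists (c : K) (g : {mpoly K[n]}),
      mdvd g (G i - c%:MP) /\ (mtdeg g < d)%N /\ g.@[fun _ => 0] = 0) ->
  mtdeg (G i) = 1%N.
Proof.
move=> ch [dl dl0 edet] sym d0 hd hk [c [g [[q eq] [gd g0]]]].
set L := hpart 1 (G i).
have hL : forall m, mdeg m != 1%N -> L@_m = 0.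
  by move=> m hm; rewrite /L mcoeff_hpart (negbTE hm).
have hd' : L^`M(i) != 0 by [].
have ai : L@_U_(i) != 0.
  by move: hd'; have := L_deriv hL i; move=> /= ->; rewrite mpolyC_eq0.
have nzL : L != 0 by apply: contraNneq hd' => ->; rewrite mderiv0.
have [h eh] := stepA hL ai erefl nzL d0 hk eq g0 gd.
set F := G i - c%:MP in eh.
have h1F : hpart 1 F = L.
  apply/mpolyP => m; rewrite !mcoeff_hpart; case: eqP => // m1.
  rewrite mcoeffB mcoeffC; case: eqP => [e|]; last by rewrite mulr0 subr0.
  by move: m1; rewrite e mdeg0.
have h01 := h0_one hL eh h1F nzL.
set J := jacobian G.
pose C := fun k l => cofactor J k l.
have dF l : F^`M(l) = J i l by rewrite /J /jacobian mxE mderivB mderivC subr0.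
have E1 : \sum_k \sum_l (L@_U_(k))%:MP * F^`M(l) * C k l = (dl * L@_U_(i))%:MP.
  have row k : \sum_l F^`M(l) * C k l = dl%:MP * (i == k)%:R.
    have := congr1 (fun M : 'M_n => M i k) (mul_mx_adj J).
    rewrite !mxE edet mulr_natr => <-; apply: eq_bigr => l _.
    by rewrite dF [(\adj J) l k]mxE.
  transitivity (\sum_(k < n) ((L@_U_(k))%:MP * (dl%:MP * (i == k)%:R) : {mpoly K[n]})).
    apply: eq_bigr => k _; rewrite -row mulr_sumr; apply: eq_bigr => l _.
    by rewrite [RHS]mulrA.
  rewrite (bigD1 i) // eqxx mulr1 big1.
    transitivity ((L@_U_(i))%:MP * dl%:MP : {mpoly K[n]}); first exact: addr0.
    by rewrite mulrC mpolyCM.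
  by move=> k hk'; rewrite eq_sym (negbTE hk') mulr0 mulr0.
have E2 : \sum_k \sum_l F^`M(k)^`M(l) * C k l = 0.
  transitivity (\sum_k \sum_l (J k l)^`M(i) * C k l); last first.
    by rewrite -mderiv_det edet mderivC.
  apply: eq_bigr => k _; apply: eq_bigr => l _; congr (_ * _).
  have -> : J k l = (G k)^`M(l) by rewrite /J /jacobian mxE.
  rewrite [RHS]mderiv_comm.
  have -> : (G k)^`M(i) = J i k.
    by rewrite /J -[in RHS]sym mxE /jacobian mxE.
  by rewrite -dF.
have all_r : forall r, exists u, h - 1 = L ^+ r.+1 * u.
  elim=> [|r [u eu]].
    by have := base_step hL ai dl0 eh h01; move=> /(_ C E1).
  by have := ind_step hL ai ch dl0 nzL eh; move=> /(_ C r u E1 E2 eu).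
have h1 : h = 1.
  apply/eqP; rewrite -subr_eq0; apply/negPn/negP => nz.
  have [u eu] := all_r (msize (h - 1)).
  have nzu : u != 0 by apply: contra_neq nz; rewrite eu => ->; rewrite mulr0.
  have := congr1 (fun p => msize p) eu; rewrite /= msizeM ?expf_neq0 //.
  rewrite (msizeLX hL) //.
  have : (0 < msize u)%N by rewrite lt0n msize_poly_eq0.
  move: (msize u) (msize (h - 1)) => x y; lia.
have eG : G i = L + c%:MP.
  by have := eh; rewrite h1 mul1r /F => <-; rewrite subrK.
rewrite eG /mtdeg.
have [m hm] := nz_coef nzL.
have m1 : mdeg m = 1%N by apply/eqP; apply: contraNT hm => /hL ->.
have le2 : (msize (L + c%:MP) <= 2)%N.
  apply: (Deg_msize (e := 1)); apply: DegD; first exact: L_Deg hL.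
  exact: Deg_le (DegC c).
have ge2 : (2 <= msize (L + c%:MP))%N.
  rewrite -m1; apply: msize_mdeg_lt; rewrite -[_ \in _]negbK -mcoeff_eq0 mcoeffD mcoeffC.
  have -> : (m == 0%MM) = false by apply/negP => /eqP e; rewrite e mdeg0 in m1.
  by rewrite mulr0 addr0.
have -> : msize (L + c%:MP) = 2%N by apply/eqP; rewrite eqn_leq le2 ge2.
by [].
Qed.
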